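(* Let $k>0$ and let $p(n,j;k),q(n,j;k)$ be as in the context. Define $P_n(x;k)=\sum_{j=0}^{\lfloor (n-1)/2\rfloor}p(n,j;k)x^j(1+x)^{n-1-2j}$ and $Q_n(x;k)=\sum_{j=0}^{\lfloor n/2\rfloor}q(n,j;k)x^j(1+x)^{n-2j}$, so $P_0(x;k)=0$, $Q_0(x;k)=1$. Then for $n\ge0$ (terms with factor $n$ being $0$ when $n=0$) $$P_{n+1}(x;k)=(1+(2kn-2k+1)x)P_n(x;k)+2kx(1-x)P_n'(x;k)+2knxP_{n-1}(x;k)+Q_n(x;k),$$ $$Q_{n+1}(x;k)=2knxQ_n(x;k)+2kx(1-x)Q_n'(x;k)+2knxQ_{n-1}(x;k)+(2k-1)xP_n(x;k),$$ where $'$ denotes $d/dx$.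
   Context: The numbers $p(n,j;k),q(n,j;k)$ ($n\ge0$, $j\in\mathbb{Z}$) are determined by $q(0,0;k)=1$, $q(0,j;k)=0$ for $j\ne0$, $p(0,j;k)=0$ for all $j$, $p(n,j;k)=q(n,j;k)=0$ for $j<0$, and for $n\ge0$: $p(n+1,j;k)=(1+2kj)p(n,j;k)+4k(n-2j+1)p(n,j-1;k)+2kn\,p(n-1,j-1;k)+q(n,j;k)$ and $q(n+1,j;k)=2kj\,q(n,j;k)+4k(n-2j+2)q(n,j-1;k)+2kn\,q(n-1,j-1;k)+(2k-1)p(n,j-1;k)$ (terms with factor $n$ vanish when $n=0$). *)

(* Defs.v *)
From mathcomp Require Import all_boot all_order all_algebra.
Set Implicit Arguments. Unset Strict Implicit. Unset Printing Implicit Defensive.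
Import Order.TTheory GRing.Theory Num.Theory.
Local Open Scope ring_scope.

Section PQ.
Variable R : realFieldType.
Variable k : R.

(* coefficient families indexed by j : nat; the value at j < 0 is 0 *)
Definition coefs := ((nat -> R) * (nat -> R))%type.

Definition shift1 (f : nat -> R) (j : nat) : R :=
  if j is j'.+1 then f j' else 0.

(* values at n+1 from values at n-1 (prev) and n (cur) *)
Definition pq_step (n : nat) (prev cur : coefs) : coefs :=
  let: (pp, qp) := prev in
  let: (pc, qc) := cur in
  (fun j => (1 + 2 * k * j%:R) * pc j
            + 4 * k * (n%:R - 2 * j%:R + 1) * shift1 pc j
            + 2 * k * n%:R * shift1 pp j + qc j,
   fun j => 2 * k * j%:R * qc j
            + 4 * k * (n%:R - 2 * j%:R + 2) * shift1 qc j
            + 2 * k * n%:R * shift1 qp j + (2 * k - 1) * shift1 pc j).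

Definition pq0 : coefs := (fun _ => 0, fun j => if j == 0%N then 1 else 0).
Definition zero_coefs : coefs := (fun _ => 0, fun _ => 0).

(* pq_aux n = (values at n, values at n+1) *)
Fixpoint pq_aux (n : nat) : coefs * coefs :=
  match n with
  | 0%N => (pq0, pq_step 0 zero_coefs pq0)
  | n'.+1 => let: (a, b) := pq_aux n' in (b, pq_step n'.+1 a b)
  end.

Definition pcoef (n j : nat) : R := (pq_aux n).1.1 j.
Definition qcoef (n j : nat) : R := (pq_aux n).1.2 j.

Definition Ppoly (n : nat) : {poly R} :=
  \sum_(j < ((n.-1)./2).+1)
     pcoef n j *: ('X ^+ j * (1 + 'X) ^+ (n.-1 - 2 * j)).
Definition Qpoly (n : nat) : {poly R} :=
  \sum_(j < (n./2).+1)
     qcoef n j *: ('X ^+ j * (1 + 'X) ^+ (n - 2 * j)).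
End PQ.

(* Main.v *)
Require Import Defs.
From mathcomp Require Import all_boot all_order all_algebra.
From mathcomp Require Import ring zify.
Import Order.TTheory GRing.Theory Num.Theory.
Local Open Scope ring_scope.

Section S.
Variable R : realFieldType.
Variable k : R.

Lemma derXY (j m : nat) :
  ('X^j * (1 + 'X) ^+ m : {poly R})^`() =
   ('X^(j.-1) * (1+'X)^+m) *+ j + ('X^j * (1+'X)^+m.-1) *+ m.
Proof.
rewrite derivM derivXn deriv_exp derivD derivC derivX add0r mul1r.
by rewrite mulrnAl mulrnAr.
Qed.

Lemma termP (j m n : nat) : n = (m + 2*j).+1%N ->
 (1 + (2*k*n%:R - 2*k + 1) *: ('X : {poly R})) * ('X^j * (1+'X)^+m)
   + (2*k) *: ('X * (1 - 'X) * ('X^j * (1+'X)^+m)^`())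
 = (1 + 2*k*j%:R) *: ('X^j * (1+'X)^+m.+1)
   + (4*k*(n%:R - 2*j%:R - 1)) *: ('X^(j.+1) * (1+'X)^+m.-1) :> {poly R}.
Proof.
move=> ->; rewrite derXY -!mul_polyC.
case: j => [|j]; case: m => [|m] /=; rewrite ?exprS; ring.
Qed.

Lemma termQ (j m n : nat) : n = (m + 2*j)%N ->
 (2*k*n%:R) *: (('X : {poly R}) * ('X^j * (1+'X)^+m))
   + (2*k) *: ('X * (1 - 'X) * ('X^j * (1+'X)^+m)^`())
 = (2*k*j%:R) *: ('X^j * (1+'X)^+m.+1)
   + (4*k*(n%:R - 2*j%:R)) *: ('X^(j.+1) * (1+'X)^+m.-1) :> {poly R}.
Proof.
move=> ->; rewrite derXY -!mul_polyC.
case: j => [|j]; case: m => [|m] /=; rewrite ?exprS; ring.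
Qed.

Lemma pcoef_rec n j : pcoef k n.+1 j =
  (1 + 2*k*j%:R) * pcoef k n j + 4*k*(n%:R - 2*j%:R + 1) * shift1 (pcoef k n) j
  + 2*k*n%:R * shift1 (pcoef k n.-1) j + qcoef k n j.
Proof.
rewrite /pcoef /qcoef; case: n => [|n] /=.
  by case: j => [|j]; rewrite /shift1 /=; ring.
by case: (pq_aux k n) => [[a b] [c d]] /=.
Qed.

Lemma qcoef_rec n j : qcoef k n.+1 j =
  2*k*j%:R * qcoef k n j + 4*k*(n%:R - 2*j%:R + 2) * shift1 (qcoef k n) j
  + 2*k*n%:R * shift1 (qcoef k n.-1) j + (2*k - 1) * shift1 (pcoef k n) j.
Proof.
rewrite /pcoef /qcoef; case: n => [|n] /=.
  by case: j => [|j]; rewrite /shift1 /=; ring.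
by case: (pq_aux k n) => [[a b] [c d]] /=.
Qed.

Definition V n := (forall j, (n <= 2*j)%N -> pcoef k n j = 0) /\
                  (forall j, (n < 2*j)%N -> qcoef k n j = 0).

Lemma V0 : V 0.
Proof. split=> j hj //; rewrite /qcoef /=; case: j hj => //. Qed.

Lemma Vstep n : V n.-1 -> V n -> V n.+1.
Proof.
move=> [p1 q1] [p0 q0]; split=> -[|j] hj //=.
- rewrite pcoef_rec /= (p0 j.+1) ?(q0 j.+1); [|lia|lia].
  rewrite (p1 j); last by case: n hj {p1 q1 p0 q0} => //= n; lia.
  have [h|h] : (n <= 2*j)%N \/ n = (2*j).+1 by lia.
    by rewrite (p0 j) //; ring.
  by rewrite h; ring.
- rewrite qcoef_rec /= (q0 j.+1) ?(p0 j); [|lia|lia].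
  have [n0|nz] := eqVneq n 0%N.
    have [h|h] : (0 < 2*j)%N \/ j = 0%N by lia.
      by rewrite (q0 j) ?n0 //; ring.
    by rewrite h n0; ring.
  rewrite (q1 j); last by case: n hj nz {p1 q1 p0 q0} => //= n; lia.
  have [h|h] : (n < 2*j)%N \/ n = (2*j)%N by lia.
    by rewrite (q0 j) //; ring.
  by rewrite h; ring.
Qed.

Lemma Vall n : V n.
Proof.
suff : V n /\ V n.+1 by case.
elim: n => [|n [h1 h2]]; first by split; [exact: V0 | exact: (@Vstep 0%N V0 V0)].
by split=> //; exact: (@Vstep n.+1 h1 h2).
Qed.

Lemma Ppoly_S n N : ((n.-1)./2 < N)%N ->
  Ppoly k n = \sum_(j < N) pcoef k n j *: ('X^j * (1+'X)^+(n.-1 - 2*j)).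
Proof.
move=> hN; rewrite /Ppoly (big_ord_widen N (fun j => pcoef k n j *: ('X^j * (1+'X)^+(n.-1 - 2*j)))) //.
rewrite big_mkcond; apply eq_bigr => i _; case: ifP => // /negbT; rewrite -leqNgt => hi.
by rewrite (Vall n).1 ?scale0r //; move: hi; rewrite -divn2; lia.
Qed.

Lemma Qpoly_S n N : ((n./2) < N)%N ->
  Qpoly k n = \sum_(j < N) qcoef k n j *: ('X^j * (1+'X)^+(n - 2*j)).
Proof.
move=> hN; rewrite /Qpoly (big_ord_widen N (fun j => qcoef k n j *: ('X^j * (1+'X)^+(n - 2*j)))) //.
rewrite big_mkcond; apply eq_bigr => i _; case: ifP => // /negbT; rewrite -leqNgt => hi.
by rewrite (Vall n).2 ?scale0r //; move: hi; rewrite -divn2; lia.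
Qed.

Lemma sum_shift (F : nat -> {poly R}) N : F 0%N = 0 ->
  \sum_(j < N.+1) F j = \sum_(j < N) F j.+1.
Proof. by move=> h; rewrite big_ord_recl h add0r. Qed.

Lemma sum_drop (F : nat -> {poly R}) N : F N = 0 ->
  \sum_(j < N.+1) F j = \sum_(j < N) F j.
Proof. by move=> h; rewrite big_ord_recr /= h addr0. Qed.


Lemma partP n : Ppoly k n.+1 =
    (1 + (2 * k * n%:R - 2 * k + 1) *: 'X) * Ppoly k n
    + (2 * k) *: ('X * (1 - 'X) * (Ppoly k n)^`())
    + (2 * k * n%:R) *: ('X * Ppoly k n.-1)
    + Qpoly k n.
Proof.
rewrite (@Ppoly_S n.+1 n.+3); last by rewrite -divn2; lia.
rewrite (@Ppoly_S n n.+2); last by rewrite -divn2; lia.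
rewrite (@Ppoly_S n.-1 n.+2); last by rewrite -divn2; lia.
rewrite (@Qpoly_S n n.+2); last by rewrite -divn2; lia.
under eq_bigr do rewrite pcoef_rec !scalerDl.
rewrite !big_split /=.
rewrite (sum_drop (fun j => ((1 + 2 * k * j%:R) * pcoef k n j) *: ('X^j * (1 + 'X) ^+ (n - 2 * j)))); last first.
  by rewrite (Vall n).1 ?mulr0 ?scale0r //; lia.
rewrite (sum_drop (fun j => qcoef k n j *: ('X^j * (1 + 'X) ^+ (n - 2 * j)))); last first.
  by rewrite (Vall n).2 ?scale0r //; lia.
rewrite (sum_shift (fun j => (4 * k * (n%:R - 2 * j%:R + 1) * shift1 (pcoef k n) j) *: ('X^j * (1 + 'X) ^+ (n - 2 * j)))); last first.
  by rewrite /= mulr0 scale0r.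
rewrite (sum_shift (fun j => (2 * k * n%:R * shift1 (pcoef k n.-1) j) *: ('X^j * (1 + 'X) ^+ (n - 2 * j)))); last first.
  by rewrite /= mulr0 scale0r.
rewrite raddf_sum !(mulr_sumr, scaler_sumr).
rewrite -!big_split; apply: eq_bigr => -[j _] _ /=.
have e0 : (n.-2 - 2 * j = n - 2 * j.+1)%N by lia.
rewrite e0.
have [h|h] := leqP n (2 * j).
  rewrite (Vall n).1 // !scale0r deriv0 !mulr0 !scale0r -!mul_polyC (exprS 'X j); ring.
have e1 : (n - 2 * j = (n.-1 - 2 * j).+1)%N by lia.
have e2 : (n - 2 * j.+1 = (n.-1 - 2 * j).-1)%N by lia.
rewrite e1 e2 derivZ derXY.
have hm : n = ((n.-1 - 2 * j) + 2 * j).+1%N by lia.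
move: (n.-1 - 2 * j)%N hm => m hm; subst n.
rewrite -!mul_polyC.
case: j {h e0 e1 e2} => [|j]; case: m => [|m] /=; rewrite ?exprS; ring.
Qed.

Lemma partQ n : Qpoly k n.+1 =
    (2 * k * n%:R) *: ('X * Qpoly k n)
    + (2 * k) *: ('X * (1 - 'X) * (Qpoly k n)^`())
    + (2 * k * n%:R) *: ('X * Qpoly k n.-1)
    + (2 * k - 1) *: ('X * Ppoly k n).
Proof.
rewrite (@Qpoly_S n.+1 n.+3); last by rewrite -divn2; lia.
rewrite (@Qpoly_S n n.+2); last by rewrite -divn2; lia.
rewrite (@Qpoly_S n.-1 n.+2); last by rewrite -divn2; lia.
rewrite (@Ppoly_S n n.+2); last by rewrite -divn2; lia.
under eq_bigr do rewrite qcoef_rec !scalerDl.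
rewrite !big_split /=.
rewrite (sum_drop (fun j => (2 * k * j%:R * qcoef k n j) *: ('X^j * (1 + 'X) ^+ (n.+1 - 2 * j)))); last first.
  by rewrite (Vall n).2 ?mulr0 ?scale0r //; lia.
rewrite (sum_shift (fun j => (4 * k * (n%:R - 2 * j%:R + 2) * shift1 (qcoef k n) j) *: ('X^j * (1 + 'X) ^+ (n.+1 - 2 * j)))); last first.
  by rewrite /= mulr0 scale0r.
rewrite (sum_shift (fun j => (2 * k * n%:R * shift1 (qcoef k n.-1) j) *: ('X^j * (1 + 'X) ^+ (n.+1 - 2 * j)))); last first.
  by rewrite /= mulr0 scale0r.
rewrite (sum_shift (fun j => ((2 * k - 1) * shift1 (pcoef k n) j) *: ('X^j * (1 + 'X) ^+ (n.+1 - 2 * j)))); last first.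
  by rewrite /= mulr0 scale0r.
rewrite raddf_sum !(mulr_sumr, scaler_sumr).
rewrite -!big_split; apply: eq_bigr => -[j _] _ /=.
have e0 : (n.+1 - 2 * j.+1 = n.-1 - 2 * j)%N by lia.
rewrite e0.
have [h|h] := ltnP n (2 * j).
  rewrite (Vall n).2 // !scale0r deriv0 !mulr0 !scale0r -!mul_polyC (exprS 'X j); ring.
have e1 : (n.+1 - 2 * j = (n - 2 * j).+1)%N by lia.
have e2 : (n.-1 - 2 * j = (n - 2 * j).-1)%N by lia.
rewrite e1 e2 derivZ derXY.
have hm : n = ((n - 2 * j) + 2 * j)%N by lia.
move: (n - 2 * j)%N hm => m hm; subst n.
rewrite -!mul_polyC.
case: j {h e0 e1 e2} => [|j]; case: m => [|m] /=; rewrite ?exprS; ring.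
Qed.
End S.

Theorem corollary14 (R : realFieldType) (k : R) (hk : 0 < k) (n : nat) :
  Ppoly k n.+1 =
    (1 + (2 * k * n%:R - 2 * k + 1) *: 'X) * Ppoly k n
    + (2 * k) *: ('X * (1 - 'X) * (Ppoly k n)^`())
    + (2 * k * n%:R) *: ('X * Ppoly k n.-1)
    + Qpoly k n
  /\
  Qpoly k n.+1 =
    (2 * k * n%:R) *: ('X * Qpoly k n)
    + (2 * k) *: ('X * (1 - 'X) * (Qpoly k n)^`())
    + (2 * k * n%:R) *: ('X * Qpoly k n.-1)
    + (2 * k - 1) *: ('X * Ppoly k n).
Proof.
split; [exact: partP | exact: partQ].
Qed.
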